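(* Let $R'\subseteq R$ be (not necessarily commutative) subrings of a $\mathbb Q$-algebra and let $d\ge1$ be an integer with $dR\subseteq R'$. Then $|R^\times/R'^\times|\le|R/dR|$.
   Context: $R^\times$ denotes the unit group of $R$, and $R^\times/R'^\times$ the set of cosets of the subgroup $R'^\times$. *)

(* Defs.v *)
From HB Require Import structures.
From mathcomp Require Import all_boot all_order all_algebra.
From mathcomp Require Import boolp classical_sets cardinality.
Set Implicit Arguments. Unset Strict Implicit. Unset Printing Implicit Defensive.
Import GRing.Theory.
Local Open Scope ring_scope.
Local Open Scope classical_set_scope.

Definition is_subring (A : pzRingType) (S : set A) : Prop :=
  S 1 /\ (forall x y, S x -> S y -> S (x - y)) /\
  (forall x y, S x -> S y -> S (x * y)).

Definition units_of (A : pzRingType) (S : set A) : set A :=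
  [set x | S x /\ exists2 y, S y & x * y = 1 /\ y * x = 1].

(* The set of (left) cosets u S'^x of the unit group of S' in that of S:
   the quotient S^x / S'^x, as a set of subsets of A. *)
Definition unit_cosets (A : pzRingType) (S S' : set A) : set (set A) :=
  [set [set u * w | w in units_of S'] | u in units_of S].

(* d S = { d r | r in S } and the additive quotient S / dS, as a set of cosets. *)
Definition mul_nat_set (A : pzRingType) (d : nat) (S : set A) : set A :=
  [set d%:R * r | r in S].

Definition add_cosets (A : pzRingType) (d : nat) (S : set A) : set (set A) :=
  [set [set x + y | y in mul_nat_set d S] | x in S].

(* Main.v *)
Require Import Defs.
From HB Require Import structures.
From mathcomp Require Import all_boot all_order all_algebra.
From mathcomp Require Import boolp classical_sets cardinality.
Local Open Scope ring_scope.
Local Open Scope classical_set_scope.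
Local Open Scope card_scope.

Import GRing.Theory.

Lemma units_mul (A : pzRingType) (S : set A) x y :
  is_subring S -> units_of S x -> units_of S y -> units_of S (x * y).
Proof.
move=> [S1 [SB SM]] [Sx [x' Sx' [xx' x'x]]] [Sy [y' Sy' [yy' y'y]]].
split; first exact: SM.
exists (y' * x'); first exact: SM.
split.
- by rewrite mulrA -(mulrA x) yy' mulr1 xx'.
- by rewrite mulrA -(mulrA y') x'x mulr1 y'y.
Qed.

Lemma coset_eq (A : pzRingType) (R R' : set A) (d : nat) u v :
  is_subring R -> is_subring R' -> R' `<=` R ->
  mul_nat_set d R `<=` R' ->
  units_of R u -> units_of R v ->
  (exists2 r, R r & v = u + d%:R * r) ->
  [set u * w | w in units_of R'] = [set v * w | w in units_of R'].
Proof.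
move=> sR sR' R'R dRR' Uu Uv [r Rr hv].
have [R1 [RB RM]] := sR.
have [R'1 [R'B R'M]] := sR'.
move: (Uu) (Uv) => [Ru [u' Ru' [uu' u'u]]] [Rv [v' Rv' [vv' v'v]]].
have R0 : R 0 by rewrite -(subrr 1); exact: RB.
have RN : forall x, R x -> R (- x) by move=> x Rx; rewrite -sub0r; exact: RB.
have RD : forall x y, R x -> R y -> R (x + y).
  by move=> x y Rx Ry; rewrite -(opprK y); apply: (RB) => //; exact: RN.
have R'N : forall x, R' x -> R' (- x).
  by move=> x Rx; rewrite -sub0r; apply: (R'B) => //; rewrite -(subrr 1); exact: R'B.
have R'D : forall x y, R' x -> R' y -> R' (x + y).
  by move=> x y Rx Ry; rewrite -(opprK y); apply: (R'B) => //; exact: R'N.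
have comm : forall a b : A, a * (d%:R * b) = d%:R * (a * b).
  by move=> a b; rewrite !mulr_natl mulrnAr.
set w := u' * v. set w' := v' * u.
have Rw : R' w.
  rewrite /w hv mulrDr u'u comm; apply: (R'D) => //; apply: (dRR').
  by exists (u' * r) => //; exact: RM.
have u0 : u = v - d%:R * r by rewrite hv addrK.
have Rw' : R' w'.
  rewrite /w' u0 mulrBr v'v comm; apply: (R'B) => //; apply: (dRR').
  by exists (v' * r) => //; exact: RM.
have ww' : w * w' = 1 by rewrite /w /w' mulrA -(mulrA u') vv' mulr1 u'u.
have w'w : w' * w = 1 by rewrite /w /w' mulrA -(mulrA v') uu' mulr1 v'v.
have Uw : units_of R' w by split => //; exists w'.
have Uw' : units_of R' w' by split => //; exists w.
apply/seteqP; split => z [x Ux <-].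
- exists (w' * x); first exact: units_mul.
  by rewrite mulrA /w' mulrA vv' mul1r.
- exists (w * x); first exact: units_mul.
  by rewrite mulrA /w mulrA uu' mul1r.
Qed.

Theorem lemma10p11 (A : algType rat) (R R' : set A) (d : nat) :
  is_subring R -> is_subring R' -> R' `<=` R -> (1 <= d)%N ->
  mul_nat_set d R `<=` R' ->
  unit_cosets R R' #<= add_cosets d R.
Proof.
move=> sR sR' R'R d1 dRR'.
pose h (X : set A) := [set xget 0 (X `&` units_of R) * w | w in units_of R'].
have sub : unit_cosets R R' `<=` h @` add_cosets d R.
  move=> C [u Uu <-].
  have [R1 [RB RM]] := sR.
  have R0 : R 0 by rewrite -(subrr 1); exact: RB.
  exists [set u + y | y in mul_nat_set d R].
    by exists u => //; case: Uu.
  have Xu : ([set u + y | y in mul_nat_set d R] `&` units_of R) u.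
    split => //; exists 0; last by rewrite addr0.
    by exists 0 => //; rewrite mulr0.
  have := xgetI 0 Xu.
  set v := xget _ _ => -[[y [r Rr <-] vE] Uv].
  rewrite /h -/v; clearbody v; symmetry; apply: (coset_eq _ _ _ _ _ _ sR sR' R'R dRR' Uu Uv).
  by exists r.
apply: card_le_trans (subset_card_le sub) _.
exact: card_image_le.
Qed.
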